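(* For every $\alpha\ge0$ and $\beta\ge1$, the Sharma-Mittal entropy $S_{\alpha,\beta}$ is subadditive on the majorization lattice: for all $\mathbf{p},\mathbf{q}\in\mathcal{P}_n$, $$S_{\alpha,\beta}(\mathbf{p}\wedge\mathbf{q})\le S_{\alpha,\beta}(\mathbf{p})+S_{\alpha,\beta}(\mathbf{q}).$$
   Context: $\mathcal{P}_n=\{\mathbf{p}=(p_1,\dots,p_n): p_i\ge0,\ \sum_i p_i=1\}$, with all vectors taken with components in non-increasing order. Majorization: $\mathbf{p}\preceq\mathbf{q}$ iff $\sum_{i=1}^k p_i\le\sum_{i=1}^k q_i$ for all $k$. The greatest lower bound in the lattice $(\mathcal{P}_n,\preceq)$ is $\mathbf{p}\wedge\mathbf{q}=\mathbf{r}$ with $\sum_{i=1}^k r_i=\min\{\sum_{i=1}^k p_i,\sum_{i=1}^k q_i\}$ for $k=1,\dots,n$. The Sharma-Mittal entropy is $S_{\alpha,\beta}(\mathbf{p})=\frac{1}{1-\beta}\left[\left(\sum_{i=1}^n p_i^\alpha\right)^{\frac{1-\beta}{1-\alpha}}-1\right]$, with values at $\alpha=1$ and/or $\beta=1$ defined by the corresponding limits. *)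

(* Defs.v *)
From HB Require Import structures.
From mathcomp Require Import all_boot all_order all_algebra.
From mathcomp Require Import all_classical all_reals all_analysis.
Set Implicit Arguments. Unset Strict Implicit. Unset Printing Implicit Defensive.
Import Order.TTheory GRing.Theory Num.Theory.
Local Open Scope ring_scope.

Section SM.
Variables (R : realType) (n : nat).

Definition prob_vec (p : 'I_n -> R) : Prop :=
  (forall i, 0 <= p i) /\ (\sum_(i < n) p i = 1) /\
  (forall i j : 'I_n, (i <= j)%N -> p j <= p i).

(* partial sum p_1 + ... + p_k  (indices 0..k-1 in 0-based ordinals) *)
Definition psum (p : 'I_n -> R) (k : nat) : R := \sum_(i < n | (i < k)%N) p i.

(* greatest lower bound: the vector whose k-th partial sums are the minima *)
Definition meet (p q : 'I_n -> R) : 'I_n -> R :=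
  fun i => Num.min (psum p i.+1) (psum q i.+1) - Num.min (psum p i) (psum q i).

Definition shannon (p : 'I_n -> R) : R := - \sum_(i < n | 0 < p i) p i * ln (p i).

(* sum_i p_i^alpha, over the support (so that alpha = 0 counts the support) *)
Definition powsum (alpha : R) (p : 'I_n -> R) : R :=
  \sum_(i < n | 0 < p i) p i `^ alpha.

(* Sharma-Mittal entropy, with the limit values at alpha = 1 and/or beta = 1 *)
Definition sharma_mittal (alpha beta : R) (p : 'I_n -> R) : R :=
  if alpha == 1 then
    (if beta == 1 then shannon p
     else (expR ((1 - beta) * shannon p) - 1) / (1 - beta))
  else
    (if beta == 1 then ln (powsum alpha p) / (1 - alpha)
     else ((powsum alpha p) `^ ((1 - beta) / (1 - alpha)) - 1) / (1 - beta)).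

End SM.

(* Main.v *)
Require Import Defs.
From HB Require Import structures.
From mathcomp Require Import all_boot all_order all_algebra.
From mathcomp Require Import all_classical all_reals all_analysis.
From mathcomp Require Import ring lra.
Import Order.TTheory GRing.Theory Num.Theory.
Local Open Scope ring_scope.
Set Implicit Arguments. Unset Strict Implicit.

Section K1.
Variable R : realType.

Lemma abel (h a : nat -> R) k : (forall i, (i < k)%N -> h i <= h i.+1) ->
  (forall j, (j <= k.+1)%N -> 0 <= \sum_(0 <= i < j) a i) ->
  \sum_(0 <= i < k.+1) h i * a i <= h k * \sum_(0 <= i < k.+1) a i.
Proof.
elim: k => [|k IH] hh ha.
  by rewrite !big_nat1.
rewrite big_nat_recr //= [X in _ <= _ * X]big_nat_recr //= mulrDr lerD2r.
apply: le_trans (IH _ _) _.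
- by move=> i ik; apply: hh; apply: ltnW.
- by move=> j jk; apply: ha; apply: leq_trans jk _.
- by apply: ler_wpM2r; [apply: ha; apply: leqW|apply: hh].
Qed.

Lemma nat_sum_ge0_eq0 (x : nat -> R) K L i : (forall j, 0 <= x j) ->
  \sum_(K <= j < L) x j = 0 -> (K <= i)%N -> (i < L)%N -> x i = 0.
Proof.
move=> x0 s0 Ki iL.
have KiL : (K <= i <= L)%N by rewrite Ki ltnW.
move: s0; rewrite (big_cat_nat Ki (ltnW iL)) /= (big_ltn iL).
have sg : forall a b, 0 <= \sum_(a <= j < b) x j by move=> a b; apply: sumr_ge0.
move=> /eqP; rewrite paddr_eq0 ?sg ?addr_ge0 ?sg // => /andP [_].
by rewrite paddr_eq0 ?sg // => /andP [/eqP -> _].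
Qed.

Lemma karamata (phi g : R -> R) (x y : nat -> R) (L : nat) :
  phi 0 = 0 ->
  (forall a b, 0 < a -> a <= b -> g b <= g a) ->
  (forall u v, 0 <= u -> 0 < v -> phi u <= phi v + g v * (u - v)) ->
  (forall i, 0 <= x i) -> (forall i, 0 <= y i) ->
  (forall i j, (i <= j)%N -> y j <= y i) ->
  (forall k, (k <= L)%N -> \sum_(0 <= i < k) y i <= \sum_(0 <= i < k) x i) ->
  \sum_(0 <= i < L) x i = \sum_(0 <= i < L) y i ->
  \sum_(0 <= i < L) phi (x i) <= \sum_(0 <= i < L) phi (y i).
Proof.
move=> phi0 gmono tang x0 y0 ymono pre tot.
pose P i := (y i == 0) || (L <= i)%N.
have exP : exists i, P i by exists L; rewrite /P leqnn orbT.
case: (ex_minnP exP) => K PK Kmin.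
have KL : (K <= L)%N by apply: Kmin; rewrite /P leqnn orbT.
have ypos : forall i, (i < K)%N -> 0 < y i.
  move=> i iK; rewrite lt_def y0 andbT; apply/negP => /eqP yi0.
  by have := Kmin i; rewrite /P yi0 eqxx /= => /(_ isT); rewrite leqNgt iK.
have yzero : forall i, (K <= i)%N -> (i < L)%N -> y i = 0.
  move=> i Ki iL; move: PK; rewrite /P => /orP [/eqP yK0|LK].
    by apply/eqP; rewrite eq_le y0 andbT -yK0 ymono.
  by move: (leq_trans LK Ki); rewrite leqNgt iL.
have sumsplit : forall f : nat -> R, \sum_(0 <= i < L) f i = \sum_(0 <= i < K) f i + \sum_(K <= i < L) f i.
  by move=> f; rewrite (big_cat_nat (leq0n K) KL).
have Ytail : \sum_(K <= i < L) y i = 0.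
  by rewrite big_nat_cond big1 // => i /andP [/andP [Ki iL] _]; apply: yzero.
have XK : \sum_(0 <= i < K) x i = \sum_(0 <= i < K) y i.
  apply/eqP; rewrite eq_le pre // andbT.
  have := tot; rewrite !sumsplit Ytail addr0 => <-.
  rewrite lerDl; apply: sumr_ge0 => i _; exact: x0.
have Xtail : \sum_(K <= i < L) x i = 0.
  by have := tot; rewrite !sumsplit Ytail addr0 XK => /eqP; rewrite -subr_eq0 addrC addKr => /eqP.
have xzero := nat_sum_ge0_eq0 x0 Xtail.
rewrite !sumsplit.
have -> : \sum_(K <= i < L) phi (x i) = 0.
  by rewrite big_nat_cond big1 // => i /andP [/andP [Ki iL] _]; rewrite xzero.
have -> : \sum_(K <= i < L) phi (y i) = 0.
  by rewrite big_nat_cond big1 // => i /andP [/andP [Ki iL] _]; rewrite yzero.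
rewrite !addr0 -subr_le0 -sumrB.
case: K KL ypos XK {PK Kmin yzero sumsplit Ytail Xtail xzero} => [|k] KL ypos XK.
  by rewrite big_geq.
have H1 : \sum_(0 <= i < k.+1) (phi (x i) - phi (y i)) <=
          \sum_(0 <= i < k.+1) g (y i) * (x i - y i).
  rewrite big_nat_cond [X in _ <= X]big_nat_cond; apply: ler_sum => i /andP [/andP [_ ik] _].
  by rewrite lerBlDl; apply: tang; [apply: x0 | apply: ypos].
have H2 := @abel (fun i => g (y i)) (fun i => x i - y i) k.
apply: le_trans H1 _; apply: le_trans (H2 _ _) _.
- by move=> i ik; apply: gmono; [apply: ypos | apply: ymono].
- move=> j jk; rewrite sumrB subr_ge0; apply: pre; exact: leq_trans jk KL.
- by rewrite sumrB XK subrr mulr0.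
Qed.
End K1.

Section K.
Variable R : realType.

Lemma pow_concave (a t : R) : 0 <= a <= 1 -> 0 <= t -> t `^ a <= a * t + (1 - a).
Proof.
move=> /andP [a0 a1] t0.
have [->|an0] := eqVneq a 0; first by rewrite powRr0 mul0r add0r subr0.
have [->|an1] := eqVneq a 1; first by rewrite powRr1 // mul1r subrr addr0.
have ap : 0 < a by rewrite lt_neqAle eq_sym an0 a0.
have a1' : a < 1 by rewrite lt_neqAle an1 a1.
have := @conjugate_powR R (t `^ a) 1 a^-1 (1 - a)^-1 (powR_ge0 _ _) ler01.
rewrite invr_gt0 ap invr_gt0 subr_gt0 a1' !invrK addrC subrK.
move=> /(_ isT isT erefl).
rewrite mulr1 -powRrM mulfV ?gt_eqF // powRr1 // powR1 mul1r => h.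
by apply: le_trans h _; rewrite mulrC.
Qed.

Lemma pow_convex (a t : R) : 1 <= a -> 0 <= t -> a * t + (1 - a) <= t `^ a.
Proof.
move=> a1 t0.
have [->|an1] := eqVneq a 1; first by rewrite powRr1 // mul1r subrr addr0.
have a1' : 1 < a by rewrite lt_neqAle eq_sym an1 a1.
have ap : 0 < a by apply: lt_trans a1'.
have qi : 0 < 1 - a^-1 by rewrite subr_gt0 invf_lt1.
have := @conjugate_powR R t 1 a (1 - a^-1)^-1 t0 ler01 ap.
rewrite invr_gt0 qi invrK addrC subrK.
move=> /(_ isT erefl).
rewrite mulr1 powR1 mul1r => h.
rewrite -subr_ge0.
have -> : t `^ a - (a * t + (1 - a)) = a * (t `^ a / a + (1 - a^-1) - t).
  by field; rewrite gt_eqF.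
by rewrite mulr_ge0 ?subr_ge0 // ltW.
Qed.

Definition phiA (a u : R) := if 0 < u then u `^ a else 0.
Definition gA (a v : R) := a * v `^ a / v.

Lemma tangA (a u v : R) : 0 <= a <= 1 -> 0 <= u -> 0 < v ->
  phiA a u <= phiA a v + gA a v * (u - v).
Proof.
move=> /andP [a0 a1] u0 v0; rewrite /phiA /gA v0.
have va0 : 0 <= v `^ a := powR_ge0 _ _.
case: ifPn => up.
  have ue : u = (u / v) * v by rewrite divfK ?gt_eqF.
  have t0 : 0 <= u / v by rewrite divr_ge0 // ltW.
  rewrite [X in X `^ a]ue (powRM _ t0 (ltW v0)).
  have := pow_concave (t := u / v) (a := a); rewrite a0 a1 => /(_ isT t0) h.
  apply: le_trans (ler_wpM2r va0 h) _.
  rewrite le_eqVlt; apply/orP; left; apply/eqP.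
  by field; rewrite gt_eqF.
have -> : u = 0 by apply/eqP; rewrite eq_le u0 andbT leNgt.
rewrite sub0r mulrN divfK ?gt_eqF //.
by rewrite -{1}(mul1r (v `^ a)) -mulrBl mulr_ge0 // subr_ge0.
Qed.

Lemma tangA' (a u v : R) : 1 <= a -> 0 <= u -> 0 < v ->
  - phiA a u <= - phiA a v + (- gA a v) * (u - v).
Proof.
move=> a1 u0 v0; rewrite /phiA /gA v0.
have va0 : 0 <= v `^ a := powR_ge0 _ _.
have a0 : 0 <= a by apply: le_trans a1.
case: ifPn => up.
  have ue : u = (u / v) * v by rewrite divfK ?gt_eqF.
  have t0 : 0 <= u / v by rewrite divr_ge0 // ltW.
  rewrite [X in X `^ a]ue (powRM _ t0 (ltW v0)).
  have := pow_convex (t := u / v) a1 t0 => h.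
  have := ler_wpM2r va0 h.
  rewrite -(lerN2) => h2; apply: le_trans h2 _.
  rewrite le_eqVlt; apply/orP; left; apply/eqP.
  by field; rewrite gt_eqF.
have -> : u = 0 by apply/eqP; rewrite eq_le u0 andbT leNgt.
rewrite oppr0 sub0r mulrN mulNr opprK divfK ?gt_eqF //.
have -> : - v `^ a + a * v `^ a = (a - 1) * v `^ a by ring.
by rewrite mulr_ge0 // subr_ge0.
Qed.

Lemma gA_anti_gen (a x y : R) : 0 < x -> x <= y -> ((y / x) `^ a <= y / x) ->
  y `^ a / y <= x `^ a / x.
Proof.
move=> x0 xy h.
have y0 : 0 < y by apply: lt_le_trans xy.
have s0 : 0 < y / x by rewrite divr_gt0.
have ye : y = (y / x) * x by rewrite divfK ?gt_eqF.
set s := y / x in ye h s0 *.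
rewrite [X in X `^ a]ye (powRM _ (ltW s0) (ltW x0)) [X in _ / X <= _]ye.
have -> : s `^ a * x `^ a / (s * x) = (s `^ a / s) * (x `^ a / x).
  by field; rewrite !gt_eqF.
rewrite -[X in _ <= X]mul1r ler_wpM2r ?divr_ge0 ?powR_ge0 ?(ltW x0) //.
by rewrite ler_pdivrMr // mul1r.
Qed.

Lemma gA_anti (a x y : R) : 0 <= a <= 1 -> 0 < x -> x <= y -> gA a y <= gA a x.
Proof.
move=> /andP [a0 a1] x0 xy; rewrite /gA -!mulrA ler_wpM2l //.
apply: gA_anti_gen => //; apply: ler1_powR => //.
by rewrite ler_pdivlMr // mul1r.
Qed.

Lemma gA_anti_gen' (a x y : R) : 0 < x -> x <= y -> (y / x <= (y / x) `^ a) ->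
  x `^ a / x <= y `^ a / y.
Proof.
move=> x0 xy h.
have y0 : 0 < y by apply: lt_le_trans xy.
have s0 : 0 < y / x by rewrite divr_gt0.
have ye : y = (y / x) * x by rewrite divfK ?gt_eqF.
set s := y / x in ye h s0 *.
rewrite [X in _ <= X `^ a / _]ye (powRM _ (ltW s0) (ltW x0)) [X in _ <= _ / X]ye.
have -> : s `^ a * x `^ a / (s * x) = (s `^ a / s) * (x `^ a / x).
  by field; rewrite !gt_eqF.
rewrite -[X in X <= _]mul1r ler_wpM2r ?divr_ge0 ?powR_ge0 ?(ltW x0) //.
by rewrite ler_pdivlMr // mul1r.
Qed.

Lemma gA_anti' (a x y : R) : 1 <= a -> 0 < x -> x <= y -> - gA a y <= - gA a x.
Proof.
move=> a1 x0 xy; rewrite lerN2 /gA -!mulrA; apply: ler_wpM2l; first exact: le_trans ler01 a1.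
apply: gA_anti_gen' => //; apply: le1r_powR => //.
by rewrite ler_pdivlMr // mul1r.
Qed.

Definition phiH (u : R) := if 0 < u then - (u * ln u) else 0.
Definition gH (v : R) := - ln v - 1.

Lemma tangH (u v : R) : 0 <= u -> 0 < v -> phiH u <= phiH v + gH v * (u - v).
Proof.
move=> u0 v0; rewrite /phiH /gH v0.
case: ifPn => up.
  have h : ln (1 + (v / u - 1)) <= v / u - 1.
    by apply: le_ln1Dx; rewrite ltrBrDl subrr divr_gt0.
  rewrite addrC subrK ln_div ?posrE // in h.
  have := ler_wpM2l (ltW up) h.
  rewrite mulrBr mulrBr mulr1 mulrCA divff ?gt_eqF // mulr1 => h2.
  by rewrite -subr_ge0; rewrite -subr_ge0 in h2; apply: le_trans h2 _; rewrite le_eqVlt; apply/orP; left; apply/eqP; ring.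
have -> : u = 0 by apply/eqP; rewrite eq_le u0 andbT leNgt.
have -> : - (v * ln v) + (- ln v - 1) * (0 - v) = v by ring.
exact: ltW.
Qed.

Lemma gH_anti (x y : R) : 0 < x -> x <= y -> gH y <= gH x.
Proof.
move=> x0 xy; rewrite /gH lerD2r lerN2 ler_ln // posrE //; exact: lt_le_trans xy.
Qed.

End K.

Section C.
Variable R : realType.
Variable n : nat.
Implicit Types f : 'I_n -> R.

Lemma psumS f k : psum f k.+1 = psum f k + \sum_(i < n | (i : nat) == k) f i.
Proof.
rewrite /psum (bigID (fun i : 'I_n => (i < k)%N)) /=; congr (_ + _); apply: eq_bigl => i.
  by case: (ltngtP i k) => h; rewrite ?h ?andbF ?andbT // ltnS ltnW.
case: (ltngtP i k) => h; rewrite ?h ?andbF ?andbT ?ltnn ?leqnn //=.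
by apply/negbTE; rewrite -leqNgt.
Qed.

Lemma sum_eqk (G : nat -> R) k :
  \sum_(i < n | (i : nat) == k) G i = if (k < n)%N then G k else 0.
Proof.
case: ltnP => kn.
  by rewrite (big_pred1 (Ordinal kn)) // => i /=; rewrite -val_eqE.
rewrite big_pred0 // => i; apply/negbTE; rewrite neq_ltn; apply/orP; left.
exact: leq_trans (ltn_ord i) kn.
Qed.

Lemma sum_eqk0 f k : (n <= k)%N -> \sum_(i < n | (i : nat) == k) f i = 0.
Proof.
move=> kn; rewrite big_pred0 // => i; apply/negbTE; rewrite neq_ltn; apply/orP; left.
exact: leq_trans (ltn_ord i) kn.
Qed.

Lemma psum0 f : psum f 0 = 0.
Proof. by rewrite /psum big_pred0. Qed.

Lemma psum_full f k : (n <= k)%N -> psum f k = \sum_(i < n) f i.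
Proof.
move=> kn; rewrite /psum; apply: eq_bigl => i; exact: leq_trans (ltn_ord i) kn.
Qed.

Lemma psum_le f k l : (forall i, 0 <= f i) -> (k <= l)%N -> psum f k <= psum f l.
Proof.
move=> f0; elim: l => [|l IH]; first by rewrite leqn0 => /eqP ->.
rewrite leq_eqVlt => /orP [/eqP -> //| ].
rewrite ltnS => /IH h; apply: le_trans h _.
by rewrite psumS lerDl sumr_ge0.
Qed.

Lemma card_lt_set k : (k <= n)%N -> #|[set i : 'I_n | (i < k)%N]| = k.
Proof.
move=> kn.
have -> : [set i : 'I_n | (i < k)%N] = [set widen_ord kn j | j : 'I_k].
  apply/setP => i; rewrite inE; apply/idP/imsetP.
    by move=> ik; exists (Ordinal ik) => //; apply: val_inj.
  by case=> j _ ->; rewrite /= ltn_ord.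
rewrite card_imset ?card_ord //.
by move=> a b /(congr1 val) /= ab; apply: val_inj.
Qed.

Lemma sorted_subset f (B : {set 'I_n}) : (forall i, 0 <= f i) ->
  (forall i j : 'I_n, (i <= j)%N -> f j <= f i) ->
  \sum_(i in B) f i <= psum f #|B|.
Proof.
move=> f0 fm.
set k := #|B|.
have kn : (k <= n)%N by rewrite /k -[X in (_ <= X)%N]card_ord max_card.
set I := [set i : 'I_n | (i < k)%N].
have cI : #|I| = k by apply: card_lt_set.
have -> : psum f k = \sum_(i in I) f i by rewrite /psum; apply: eq_bigl => i; rewrite inE.
rewrite (big_setID (A:=B) I) (big_setID (A:=I) B) finset.setIC lerD2l.
set X := B :\: I; set Y := I :\: B.
have cXY : #|X| = #|Y| by rewrite /X /Y !cardsD cI finset.setIC.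
have XY : forall x y, x \in X -> y \in Y -> f x <= f y.
  move=> x y; rewrite !inE => /andP [xI _] /andP [_ yI].
  apply: fm; apply: leq_trans (ltnW yI) _; rewrite leqNgt; exact: xI.
case: (posnP #|X|) => cX.
  by rewrite big_pred0 ?sumr_ge0 // => x; apply/negbTE; move: cX => /eqP; rewrite cards_eq0 => /eqP ->; rewrite inE.
have h : (#|Y|%:R * \sum_(x in X) f x <= #|X|%:R * \sum_(y in Y) f y :> R).
  rewrite !mulr_natl -!sumr_const.
  apply: le_trans (_ : \sum_(y in Y) \sum_(x in X) f y <= _).
    by apply: ler_sum => y yY; apply: ler_sum => x xX; apply: XY.
  by rewrite exchange_big /=.
by move: h; rewrite cXY ler_pM2l // ltr0n -cXY.
Qed.

End C.

Section D.
Variable R : realType.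
Variable n : nat.
Variables p q : 'I_n -> R.
Hypothesis hp : prob_vec p.
Hypothesis hq : prob_vec q.

Let p0 : forall i, 0 <= p i. Proof. by case: hp. Qed.
Let q0 : forall i, 0 <= q i. Proof. by case: hq. Qed.
Let p1 : \sum_(i < n) p i = 1. Proof. by case: hp => _ []. Qed.
Let q1 : \sum_(i < n) q i = 1. Proof. by case: hq => _ []. Qed.
Let pm : forall i j : 'I_n, (i <= j)%N -> p j <= p i. Proof. by case: hp => _ []. Qed.
Let qm : forall i j : 'I_n, (i <= j)%N -> q j <= q i. Proof. by case: hq => _ []. Qed.

Definition M k := Num.min (psum p k) (psum q k).
Definition G k := M k.+1 - M k.

Lemma M0 : M 0 = 0.
Proof. by rewrite /M !psum0 minxx. Qed.

Lemma M_full k : (n <= k)%N -> M k = 1.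
Proof. by move=> kn; rewrite /M !psum_full // p1 q1 minxx. Qed.

Lemma G_tail k : (n <= k)%N -> G k = 0.
Proof. by move=> kn; rewrite /G !M_full ?subrr // ltnW. Qed.

Lemma M_le k : M k <= M k.+1.
Proof.
rewrite /M ge_min !le_min.
have hpk : psum p k <= psum p k.+1 by apply: psum_le.
have hqk : psum q k <= psum q k.+1 by apply: psum_le.
case: (leP (psum p k) (psum q k)) => h.
  by rewrite hpk /= (le_trans h hqk).
by rewrite (le_trans (ltW h) hpk) hqk orbT.
Qed.

Lemma G_ge0 k : 0 <= G k.
Proof. by rewrite /G subr_ge0 M_le. Qed.

Lemma G_sum k : \sum_(0 <= i < k) G i = M k.
Proof.
elim: k => [|k IH]; first by rewrite big_geq // M0.
by rewrite big_nat_recr //= IH /G addrC subrK.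
Qed.

Lemma psum_meet k : psum (meet p q) k = M k.
Proof.
elim: k => [|k IH]; first by rewrite psum0 M0.
rewrite psumS IH.
have -> : \sum_(i < n | (i : nat) == k) meet p q i = \sum_(i < n | (i : nat) == k) G i by [].
rewrite sum_eqk; case: ltnP => kn; first by rewrite /G addrC subrK.
by rewrite addr0 !M_full // ltnW.
Qed.

Lemma meet_ge0 i : 0 <= meet p q i.
Proof. exact: G_ge0. Qed.

Definition m (t : ('I_n * 'I_n)%type) := p t.1 * q t.2.

Lemma m_ge0 t : 0 <= m t.
Proof. by rewrite mulr_ge0. Qed.

Lemma sub_bound_p (A : {set ('I_n * 'I_n)}) : \sum_(t in A) m t <= psum p #|A|.
Proof.
set B := [set t.1 | t in A].
apply: le_trans (_ : \sum_(i in B) p i <= _); last first.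
  apply: le_trans (sorted_subset _ p0 pm) _.
  by apply: psum_le => //; apply: leq_imset_card.
apply: le_trans (_ : \sum_(t | t.1 \in B) m t <= _).
  rewrite [X in _ <= X]big_mkcond [X in X <= _]big_mkcond /=; apply: ler_sum => t _.
  case: ifPn => tA; first by rewrite ifT //; apply: imset_f.
  by case: ifPn => // _; apply: m_ge0.
have -> : \sum_(t | t.1 \in B) m t = \sum_(i in B) \sum_(j < n) p i * q j.
  by rewrite pair_big_dep; apply: eq_bigl => t; rewrite andbT.
apply: ler_sum => i _; by rewrite -mulr_sumr q1 mulr1.
Qed.

Lemma sub_bound_q (A : {set ('I_n * 'I_n)}) : \sum_(t in A) m t <= psum q #|A|.
Proof.
set B := [set t.2 | t in A].
apply: le_trans (_ : \sum_(j in B) q j <= _); last first.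
  apply: le_trans (sorted_subset _ q0 qm) _.
  by apply: psum_le => //; apply: leq_imset_card.
apply: le_trans (_ : \sum_(t | true && (t.2 \in B)) m t <= _).
  rewrite [X in _ <= X]big_mkcond [X in X <= _]big_mkcond /=; apply: ler_sum => t _.
  case: ifPn => tA; first by rewrite ifT //; apply: imset_f.
  by case: ifPn => // _; apply: m_ge0.
have -> : \sum_(t | true && (t.2 \in B)) m t = \sum_(i < n) \sum_(j in B) p i * q j.
  by rewrite pair_big_dep.
rewrite exchange_big /=.
apply: ler_sum => j _; by rewrite -mulr_suml p1 mul1r.
Qed.


Lemma prefix_take (s : seq R) k : (k <= size s)%N ->
  \sum_(0 <= i < k) nth 0 s i = \sum_(x <- take k s) x.
Proof.
move=> ks; rewrite [RHS](big_nth 0) size_takel //.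
by apply: eq_big_nat => i /andP [_ ik]; rewrite nth_take.
Qed.

Lemma main_cmp (phi g : R -> R) :
  phi 0 = 0 ->
  (forall a b, 0 < a -> a <= b -> g b <= g a) ->
  (forall u v, 0 <= u -> 0 < v -> phi u <= phi v + g v * (u - v)) ->
  \sum_(i < n) phi (meet p q i) <= \sum_(t : ('I_n * 'I_n)%type) phi (m t).
Proof.
move=> phi0 gmono tang.
set leT := fun a b : ('I_n * 'I_n)%type => m b <= m a.
set s := sort leT (enum {: 'I_n * 'I_n}).
set ms := map m s.
have suniq : uniq s by rewrite sort_uniq enum_uniq.
have sizeL : size ms = (n * n)%N by rewrite size_map size_sort -cardE card_prod card_ord.
set L := size ms.
have nL : (n <= L)%N by rewrite /L sizeL; case: n => // n'; rewrite leq_pmulr.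
have y0 : forall i, 0 <= nth 0 ms i.
  move=> i; case: (ltnP i (size ms)) => h; last by rewrite nth_default.
  by have := mem_nth 0 h; case/mapP => t _ ->; apply: m_ge0.
have ssorted : sorted (fun a b : R => b <= a) ms.
  rewrite sorted_map; apply: sort_sorted => a b; exact: le_total.
have ymono : forall i j, (i <= j)%N -> nth 0 ms j <= nth 0 ms i.
  move=> i j ij; case: (ltnP j (size ms)) => h; last by rewrite (nth_default 0 h).
  have ih : (i < size ms)%N by apply: leq_ltn_trans ij h.
  apply: (sorted_leq_nth (leT := fun a b : R => b <= a)) => //.
  by move=> a b c ba cb; apply: le_trans cb ba.
have sperm : perm_eq s (enum {: 'I_n * 'I_n}) by rewrite /s perm_sort.
have totm : \sum_(t <- s) m t = 1.
  rewrite (perm_big _ sperm) big_enum /=.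
  rewrite -(pair_big xpredT xpredT (fun i j => p i * q j)) /=.
  by under eq_bigr do rewrite -mulr_sumr q1 mulr1; rewrite p1.
have := @karamata R phi g G (fun i => nth 0 ms i) L phi0 gmono tang G_ge0 y0 ymono.
have hsplit : forall F : R -> R, F 0 = 0 -> \sum_(0 <= i < L) F (G i) = \sum_(i < n) F (meet p q i).
  move=> F F0.
  have tail : \sum_(n <= i < L) F (G i) = 0.
    by rewrite big_nat_cond big1 // => i /andP [/andP [ni _] _]; rewrite G_tail.
  by rewrite (big_cat_nat (leq0n n) nL) /= tail addr0 big_mkord.
have RHS : \sum_(0 <= i < L) phi (nth 0 ms i) = \sum_(t : ('I_n * 'I_n)%type) phi (m t).
  rewrite -(big_nth 0 xpredT phi) big_map.
  by rewrite (perm_big _ sperm) big_enum.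
rewrite hsplit // RHS => H; apply: H.
- move=> k kL; rewrite G_sum prefix_take // -map_take big_map.
  rewrite big_uniq ?take_uniq //.
  have -> : \sum_(t in take k s) m t = \sum_(t in [set t | t \in take k s]) m t.
    by apply: eq_bigl => t; rewrite inE.
  have ck : #|[set t | t \in take k s]| = k.
    have kL' : (k <= size s)%N by move: kL; rewrite /L size_map.
    by rewrite cardsE; move/card_uniqP: (take_uniq k suniq) => ->; rewrite size_takel.
  by rewrite le_min -{2 4}ck sub_bound_p sub_bound_q.
- rewrite G_sum M_full // -(big_nth 0 xpredT id) big_map.
  by rewrite totm.
Qed.

End D.

Section E.
Variable R : realType.

Lemma pow_anti (e x y : R) : e <= 0 -> 0 < x -> x <= y -> y `^ e <= x `^ e.
Proof.
move=> e0 x0 xy; have y0 : 0 < y by apply: lt_le_trans xy.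
by rewrite /powR !gt_eqF // ler_expR ler_wnM2l // ler_ln.
Qed.

Lemma pow_mono (e x y : R) : 0 <= e -> 0 < x -> x <= y -> x `^ e <= y `^ e.
Proof.
move=> e0 x0 xy; have y0 : 0 < y by apply: lt_le_trans xy.
by rewrite /powR !gt_eqF // ler_expR ler_wpM2l // ler_ln.
Qed.

Lemma pow_le1a (e x : R) : e <= 0 -> 1 <= x -> x `^ e <= 1.
Proof.
move=> e0 x1; have x0 : 0 < x by apply: lt_le_trans x1.
by rewrite /powR gt_eqF // expR_le1 mulr_le0_ge0 // ln_ge0.
Qed.

Lemma pow_le1b (e x : R) : 0 <= e -> 0 < x -> x <= 1 -> x `^ e <= 1.
Proof.
move=> e0 x0 x1.
by rewrite /powR gt_eqF // expR_le1 mulr_ge0_le0 // ln_le0.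
Qed.

Lemma final_alg (A B C c : R) : c < 0 -> B * C <= A -> B <= 1 -> C <= 1 ->
  (A - 1) / c <= (B - 1) / c + (C - 1) / c.
Proof.
move=> c0 BC B1 C1.
have h : 0 <= A - B - C + 1.
  have : 0 <= (1 - B) * (1 - C) by rewrite mulr_ge0 // subr_ge0.
  lra.
rewrite -subr_le0.
have -> : (A - 1) / c - ((B - 1) / c + (C - 1) / c) = (A - B - C + 1) * c^-1.
  by field; rewrite lt_eqF.
by rewrite mulr_ge0_le0 // invr_le0 ltW.
Qed.

Variable n : nat.
Implicit Types v : 'I_n -> R.

Lemma powsumE (a : R) v : powsum a v = \sum_(i < n) phiA a (v i).
Proof. by rewrite /powsum big_mkcond. Qed.

Lemma shannonE v : shannon v = \sum_(i < n) phiH (v i).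
Proof. by rewrite /shannon -sumrN big_mkcond. Qed.

Lemma exists_pos v : (forall i, 0 <= v i) -> \sum_(i < n) v i = 1 -> exists i, 0 < v i.
Proof.
move=> v0 v1; apply/not_existsP => /= hn.
have : \sum_(i < n) v i <= 0.
  apply: sumr_le0 => i _; rewrite leNgt; apply/negP => h; exact: (hn i).
by rewrite v1 ler10.
Qed.

Lemma elem_le1 v i : (forall i, 0 <= v i) -> \sum_(i < n) v i = 1 -> v i <= 1.
Proof.
move=> v0 v1; rewrite -v1 (bigD1 i) //= lerDl; exact: sumr_ge0.
Qed.

Lemma powsum_gt0 (a : R) v : (forall i, 0 <= v i) -> \sum_(i < n) v i = 1 -> 0 < powsum a v.
Proof.
move=> v0 v1; have [i vi] := exists_pos v0 v1.
have phi0 : forall j, 0 <= phiA a (v j) by move=> j; rewrite /phiA; case: ifP => // _; apply: powR_ge0.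
rewrite powsumE (bigD1 i) //= ltr_pwDl ?sumr_ge0 //.
by rewrite /phiA vi powR_gt0.
Qed.

Lemma powsum_ge1 (a : R) v : a <= 1 -> (forall i, 0 <= v i) -> \sum_(i < n) v i = 1 -> 1 <= powsum a v.
Proof.
move=> a1 v0 v1; rewrite -[X in X <= _]v1 powsumE; apply: ler_sum => i _.
rewrite /phiA; case: ifPn => vi; last by rewrite leNgt.
by apply: ger1_powR => //; rewrite vi elem_le1.
Qed.

Lemma powsum_le1 (a : R) v : 1 <= a -> (forall i, 0 <= v i) -> \sum_(i < n) v i = 1 -> powsum a v <= 1.
Proof.
move=> a1 v0 v1; rewrite -[X in _ <= X]v1 powsumE; apply: ler_sum => i _.
rewrite /phiA; case: ifPn => vi; last by [].
by apply: ge1r_powR => //; rewrite vi elem_le1.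
Qed.

Lemma shannon_ge0 v : (forall i, 0 <= v i) -> \sum_(i < n) v i = 1 -> 0 <= shannon v.
Proof.
move=> v0 v1; rewrite shannonE; apply: sumr_ge0 => i _; rewrite /phiH.
case: ifPn => vi //; rewrite oppr_ge0; apply: mulr_ge0_le0; [exact: ltW | apply: ln_le0; exact: elem_le1].
Qed.

Lemma prod_powsum (a : R) (p q : 'I_n -> R) : (forall i, 0 <= p i) -> (forall i, 0 <= q i) ->
  \sum_(t : ('I_n * 'I_n)%type) phiA a (m p q t) = powsum a p * powsum a q.
Proof.
move=> p0 q0; rewrite !powsumE -(pair_big xpredT xpredT (fun i j => phiA a (p i * q j))) /=.
rewrite mulr_suml; apply: eq_bigr => i _; rewrite mulr_sumr; apply: eq_bigr => j _.
rewrite /phiA; case: (ltP 0 (p i)) => pi; case: (ltP 0 (q j)) => qj.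
- by rewrite mulr_gt0 // powRM // ltW.
- have -> : q j = 0 by apply/eqP; rewrite eq_le qj q0.
  by rewrite ?mulr0 ?mul0r ltxx ?mulr0 ?mul0r ?addr0.
- have -> : p i = 0 by apply/eqP; rewrite eq_le pi p0.
  by rewrite ?mulr0 ?mul0r ltxx ?mulr0 ?mul0r ?addr0.
- have -> : q j = 0 by apply/eqP; rewrite eq_le qj q0.
  by rewrite ?mulr0 ?mul0r ltxx ?mulr0 ?mul0r ?addr0.
Qed.

Lemma prod_shannon (p q : 'I_n -> R) : (forall i, 0 <= p i) -> (forall i, 0 <= q i) ->
  \sum_(i < n) p i = 1 -> \sum_(i < n) q i = 1 ->
  \sum_(t : ('I_n * 'I_n)%type) phiH (m p q t) = shannon p + shannon q.
Proof.
move=> p0 q0 p1 q1.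
have e : forall i j, phiH (p i * q j) = q j * phiH (p i) + p i * phiH (q j).
  move=> i j; rewrite /phiH; case: (ltP 0 (p i)) => pi; case: (ltP 0 (q j)) => qj.
  - by rewrite mulr_gt0 // lnM ?posrE //; ring.
  - have -> : q j = 0 by apply/eqP; rewrite eq_le qj q0.
    by rewrite ?mulr0 ?mul0r ltxx ?mulr0 ?mul0r ?addr0.
  - have -> : p i = 0 by apply/eqP; rewrite eq_le pi p0.
    by rewrite ?mulr0 ?mul0r ltxx ?mulr0 ?mul0r ?addr0.
  - have -> : q j = 0 by apply/eqP; rewrite eq_le qj q0.
    by rewrite ?mulr0 ?mul0r ltxx ?mulr0 ?mul0r ?addr0.
rewrite -(pair_big xpredT xpredT (fun i j => phiH (p i * q j))) /=.
under eq_bigr do under eq_bigr do rewrite e.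
rewrite !shannonE.
under eq_bigr do rewrite big_split /= -mulr_suml -mulr_sumr q1 mul1r.
by rewrite big_split /= -mulr_suml p1 mul1r.
Qed.

End E.

Unset Implicit Arguments.

Theorem corollary1 (R : realType) (n : nat) (alpha beta : R)
  (halpha : 0 <= alpha) (hbeta : 1 <= beta) (p q : 'I_n -> R) :
  prob_vec p -> prob_vec q ->
  sharma_mittal alpha beta (meet p q) <=
    sharma_mittal alpha beta p + sharma_mittal alpha beta q.
Proof.
move=> hp hq.
have p0 : forall i, 0 <= p i by case: hp.
have q0 : forall i, 0 <= q i by case: hq.
have p1 : \sum_(i < n) p i = 1 by case: hp => _ [].
have q1 : \sum_(i < n) q i = 1 by case: hq => _ [].
set r := meet p q.
have r0 : forall i, 0 <= r i by move=> i; apply: meet_ge0.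
have r1 : \sum_(i < n) r i = 1.
  by rewrite -(psum_full r (leqnn n)) (psum_meet hp hq) (M_full hp hq).
have HS : shannon r <= shannon p + shannon q.
  rewrite shannonE -prod_shannon //.
  apply: (main_cmp hp hq (g := @gH R)).
  - by rewrite /phiH ltxx.
  - by move=> a b; apply: gH_anti.
  - by move=> u v; apply: tangH.
have HA1 : alpha <= 1 -> powsum alpha r <= powsum alpha p * powsum alpha q.
  move=> a1; rewrite powsumE -prod_powsum //.
  apply: (main_cmp hp hq (g := gA alpha)).
  - by rewrite /phiA ltxx.
  - by move=> a b; apply: gA_anti; rewrite halpha a1.
  - by move=> u v; apply: tangA; rewrite halpha a1.
have HA2 : 1 <= alpha -> powsum alpha p * powsum alpha q <= powsum alpha r.
  move=> a1; rewrite -lerN2 powsumE -prod_powsum // -!sumrN.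
  apply: (main_cmp hp hq (phi := fun u => - phiA alpha u) (g := fun v => - gA alpha v)).
  - by rewrite /phiA ltxx oppr0.
  - by move=> a b; apply: gA_anti'.
  - by move=> u v; apply: tangA'.
have Hr := powsum_gt0 alpha r0 r1.
have Hp := powsum_gt0 alpha p0 p1.
have Hq := powsum_gt0 alpha q0 q1.
rewrite /sharma_mittal.
case: eqP => [a1|an1].
  case: eqP => [b1|bn1]; first exact: HS.
  have c0 : 1 - beta < 0 by rewrite subr_lt0 lt_neqAle hbeta andbT; apply/eqP => h; apply: bn1; rewrite h.
  apply: final_alg => //.
  - by rewrite -expRD ler_expR -mulrDr; apply: ler_wnM2l; [exact: ltW | exact: HS].
  - by rewrite expR_le1; apply: mulr_le0_ge0; [exact: ltW | exact: shannon_ge0].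
  - by rewrite expR_le1; apply: mulr_le0_ge0; [exact: ltW | exact: shannon_ge0].
have ane : alpha != 1 by apply/eqP.
case: eqP => [b1|bn1].
  have [alt|agt] := ltP alpha 1.
    have d0 : 0 < 1 - alpha by rewrite subr_gt0.
    rewrite -mulrDl ler_pM2r ?invr_gt0 // -lnM ?posrE // ler_ln ?posrE ?mulr_gt0 //.
    exact: HA1 (ltW alt).
  have agt' : 1 < alpha by rewrite lt_neqAle eq_sym ane agt.
  have d0 : 1 - alpha < 0 by rewrite subr_lt0.
  rewrite -mulrDl ler_nM2r ?invr_lt0 // -lnM ?posrE // ler_ln ?posrE ?mulr_gt0 //.
  exact: HA2 agt.
have c0 : 1 - beta < 0 by rewrite subr_lt0 lt_neqAle hbeta andbT; apply/eqP => h; apply: bn1; rewrite h.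
have [alt|agt] := ltP alpha 1.
  have d0 : 0 < 1 - alpha by rewrite subr_gt0.
  have e0 : (1 - beta) / (1 - alpha) <= 0 by rewrite pmulr_lle0 ?invr_gt0 // ltW.
  apply: (final_alg c0).
  - rewrite -(powRM _ (ltW Hp) (ltW Hq)); exact: pow_anti e0 Hr (HA1 (ltW alt)).
  - exact: pow_le1a e0 (powsum_ge1 (ltW alt) p0 p1).
  - exact: pow_le1a e0 (powsum_ge1 (ltW alt) q0 q1).
have agt' : 1 < alpha by rewrite lt_neqAle eq_sym ane agt.
have d0 : 1 - alpha < 0 by rewrite subr_lt0.
have e0 : 0 <= (1 - beta) / (1 - alpha) by apply: mulr_le0; [exact: ltW | rewrite invr_le0 ltW].
apply: (final_alg c0).
- rewrite -(powRM _ (ltW Hp) (ltW Hq)); exact: pow_mono e0 (mulr_gt0 Hp Hq) (HA2 agt).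
- exact: pow_le1b e0 Hp (powsum_le1 agt p0 p1).
- exact: pow_le1b e0 Hq (powsum_le1 agt q0 q1).
Qed.
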